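(* Let $\mathcal{R}$ be a field and $(\mathcal{C}^{\bullet},\partial)$ a bigraded cochain complex of $\mathcal{R}$-vector spaces as in the context. Then there are vector space isomorphisms \[ B^{1}(\mathcal{C},\partial)\cong B^{1}(\mathcal{N}_{0},\overline{\partial})\oplus B^{1}(\mathcal{C}^{0,\bullet},\partial_{0,1}),\qquad Z^{1}(\mathcal{C},\partial)\cong Z^{1}(\mathcal{N}_{0},\overline{\partial})\oplus\ker(\rho_{1}), \] \[ H^{1}(\mathcal{C},\partial)\cong H^{1}(\mathcal{N}_{0},\overline{\partial})\oplus\frac{\ker(\rho_{1})}{B^{1}(\mathcal{C}^{0,\bullet},\partial_{0,1})}. \]
   Context: Setting: $\mathcal{C}^{k}=\bigoplus_{p+q=k}\mathcal{C}^{p,q}$ with $\mathcal{C}^{p,q}=\{0\}$ if $p<0$ or $q<0$; $\partial$ is linear of degree $1$, $\partial^{2}=0$, $\partial=\partial_{2,-1}+\partial_{1,0}+\partial_{0,1}$ with $\partial_{i,j}(\mathcal{C}^{p,q})\subseteq\mathcal{C}^{p+i,q+j}$. For $\eta\in\mathcal{C}^k$, $\eta_{p,q}$ is its $\mathcal{C}^{p,q}$-component; $\pi_{1}:\mathcal{C}\to\bigoplus_{j\geq1}\mathcal{C}^{i,j}$ is the projection along the bigrading. $(\mathcal{C}^{0,\bullet},\partial_{0,1})$ is a cochain complex. $\mathcal{N}_{0}:=\bigoplus_{p}\ker(\partial_{0,1}:\mathcal{C}^{p,0}\to\mathcal{C}^{p,1})$ (degree $p$ part in $\mathcal{C}^{p,0}$)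 is a subcomplex of $(\mathcal{C},\partial)$ with differential $\overline\partial:=\partial|_{\mathcal{N}_0}=\partial_{1,0}|_{\mathcal{N}_0}$. $\mathcal{A}^{k}:=\{\pi_{1}(\eta)\mid\eta\in\mathcal{C}^{k},\ \pi_{1}(\partial\eta)=0\}$; for $\xi\in\mathcal{A}^{k}$ and any $\eta\in\mathcal{C}^{k}$ with $\pi_{1}\eta=\xi$, $\pi_{1}(\partial\eta)=0$, the element $\partial_{2,-1}\xi_{k-1,1}+\partial_{1,0}\eta_{k,0}$ is a cocycle of $(\mathcal{N}_{0},\overline\partial)$ whose class depends only on $\xi$, defining the linear map $\rho_{k}:\mathcal{A}^{k}\to H^{k+1}(\mathcal{N}_{0},\overline{\partial})$. *)

(* Defs.v *)
From HB Require Import structures.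
From mathcomp Require Import all_boot all_algebra.
Set Implicit Arguments. Unset Strict Implicit. Unset Printing Implicit Defensive.
Import GRing.Theory.
Local Open Scope ring_scope.

(* [subquot_iso A1 B1 A2 B2] : the subquotient A1/B1 (B1 <= A1 <= V) is     *)
(* isomorphic, as an R-vector space, to A2/B2 (B2 <= A2 <= W).  It asserts  *)
(* the existence of an R-linear map f : A1 -> A2 (given as a function on V  *)
(* that is linear on A1) inducing a bijection A1/B1 -> A2/B2:              *)
(*  - for x in A1, f x lies in B2 iff x lies in B1 (well defined+injective); *)
(*  - every y in A2 is f x + u with x in A1, u in B2 (surjective).          *)
(* With B1 = B2 = {0} this is a plain linear isomorphism A1 ~= A2.          *)
Definition subquot_iso (R : fieldType) (V W : lmodType R)
  (A1 B1 : V -> Prop) (A2 B2 : W -> Prop) : Prop :=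
  exists f : V -> W,
    [/\ (forall (a : R) (x y : V), A1 x -> A1 y -> f (a *: x + y) = a *: f x + f y),
        (forall x, A1 x -> A2 (f x)),
        (forall x, A1 x -> (B2 (f x) <-> B1 x)) &
        (forall y, A2 y -> exists2 x, A1 x & exists2 u, B2 u & y = f x + u)].

Definition zero_sub (R : fieldType) (V : lmodType R) : V -> Prop :=
  fun x => x = 0.

Definition dsum_sub (R : fieldType) (U V : lmodType R)
  (P : U -> Prop) (Q : V -> Prop) : (U * V)%type -> Prop :=
  fun z => P z.1 /\ Q z.2.

(* Main.v *)
Require Import Defs.
From HB Require Import structures.
From mathcomp Require Import all_boot all_algebra.
From mathcomp Require Import boolp classical_sets.
Import GRing.Theory.
Local Open Scope classical_set_scope.
Set Implicit Arguments. Unset Strict Implicit.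
Local Open Scope ring_scope.

Section Ext.
Variables (R : fieldType) (V W : lmodType R).

Definition subsp (U : lmodType R) (S : U -> Prop) :=
  S 0 /\ forall a x y, S x -> S y -> S (a *: x + y).
Definition linon (U U' : lmodType R) (S : U -> Prop) (f : U -> U') :=
  forall a x y, S x -> S y -> f (a *: x + y) = a *: f x + f y.

Lemma linon0 (U U' : lmodType R) (S : U -> Prop) (f : U -> U') :
  S 0 -> linon S f -> f 0 = 0.
Proof.
move=> S0 hf; have := hf 1 0 0 S0 S0; rewrite scale1r addr0.
by rewrite scale1r => h; apply: (@addrI _ (f 0)); rewrite addr0 -h.
Qed.

Definition PG (g : V -> W) (A : V -> Prop) (I : set (W * V)) (G : set (W * V)) :=
  [/\ (forall a u v, G u -> G v -> G (a *: u.1 + v.1, a *: u.2 + v.2)),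
      (forall u, G u -> A u.2 /\ g u.2 = u.1),
      (forall x, G (0, x) -> x = 0) &
      ((exists u, G u) -> I `<=` G)].

Lemma PG_func g A I G : PG g A I G -> forall y x1 x2, G (y, x1) -> G (y, x2) -> x1 = x2.
Proof.
case=> cl _ fu _ y x1 x2 h1 h2.
have := cl (-1) _ _ h1 h2; rewrite /= !scaleN1r addNr => /fu /eqP.
by rewrite addrC subr_eq0 => /eqP.
Qed.

Lemma extend (g : V -> W) (A : V -> Prop) (D : W -> Prop) (s : W -> V) :
  (forall a x y, g (a *: x + y) = a *: g x + g y) ->
  subsp A -> subsp D -> (forall y, D y -> A (s y) /\ g (s y) = y) -> linon D s ->
  exists s' : W -> V,
   [/\ (forall y, (exists2 x, A x & g x = y) -> A (s' y) /\ g (s' y) = y),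
       linon (fun y => exists2 x, A x & g x = y) s' &
       forall y, D y -> s' y = s y].
Proof.
move=> hg [A0 Acl] [D0 Dcl] hs ls.
pose I : set (W * V) := fun u => D u.1 /\ u.2 = s u.1.
have s0 : s 0 = 0 := linon0 D0 ls.
have PI : PG g A I I.
  split.
  - move=> a [y1 x1] [y2 x2] [/= d1 ->] [/= d2 ->]; split => /=; first exact: Dcl.
    by rewrite ls.
  - by move=> [y x]; rewrite /I /= => -[d ->]; exact: hs.
  - by move=> x; rewrite /I /= => -[_ ->].
  - by move=> _ u.
have [G [PGG Gmax]] : exists G, PG g A I G /\ forall B, G `<` B -> ~ PG g A I B.
  apply: Zorn_bigcup => F FP Ftot; split.
  - move=> a u v [X FX Xu] [Y FY Yv].
    have [XY|YX] := Ftot _ _ FX FY.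
    + exists Y => //; have [cl _ _ _] := FP _ FY; exact: cl (XY _ Xu) Yv.
    + exists X => //; have [cl _ _ _] := FP _ FX; exact: cl Xu (YX _ Yv).
  - by move=> u [X FX Xu]; have [_ se _ _] := FP _ FX; exact: se.
  - by move=> x [X FX Xu]; have [_ _ fu _] := FP _ FX; exact: fu.
  - move=> [u [X FX Xu]] v Iv; have [_ _ _ ne] := FP _ FX.
    by exists X => //; apply: ne => //; exists u.
have [cl se fu ne] := PGG.
have [u0 Gu0] : exists u, G u.
  case: (pselect (exists u, G u)) => // nG; exfalso.
  apply: (Gmax I) => //; split.
  - by move=> u Gu; case: nG; exists u.
  - by move=> IG; apply: nG; exists (0, s 0); apply: IG; rewrite /I /=; split.
have IG := ne (ex_intro _ u0 Gu0).
have G00 : G (0, 0).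
  by have := IG (0, s 0); rewrite s0; apply; rewrite /I /=; split; rewrite ?s0.
have full : forall y, (exists2 x, A x & g x = y) -> exists x, G (y, x).
  move=> y [x0 Ax0 gx0].
  case: (pselect (exists x, G (y, x))) => // nex; exfalso.
  pose B : set (W * V) := fun w =>
    exists u t, G u /\ w = (u.1 + t *: y, u.2 + t *: x0).
  apply: (Gmax B); split.
  - move=> w Gw; exists w, 0; split=> //; rewrite !scale0r !addr0; by case: w {Gw}.
  - move=> BG; apply: nex; exists x0.
    have : B (y, x0) by exists (0, 0), 1; rewrite /= !add0r !scale1r.
    by move/BG.
  - move=> a w1 w2 [u1 [t1 [G1 ->]]] [u2 [t2 [G2 ->]]].
    exists (a *: u1.1 + u2.1, a *: u1.2 + u2.2), (a * t1 + t2); split.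
      exact: cl.
    by congr pair; rewrite /= !scalerDr !scalerDl !scalerA addrACA.
  - move=> w [u [t [Gu ->]]] /=; have [Au gu] := se u Gu; split.
      by rewrite addrC; apply: Acl.
    by rewrite addrC hg gx0 gu addrC.
  - move=> x [u [t [Gu [e1 e2]]]].
    have [t0|tn0] := eqVneq t 0.
      move: e1 e2; rewrite t0 !scale0r !addr0 => e1 e2.
      by apply: fu; have -> : ((0 : W), x) = u by case: u Gu e1 e2 => /= ? ? _ -> ->.
    exfalso; apply: nex; exists ((- t^-1) *: u.2 + 0).
    have u1e : u.1 = - (t *: y) by apply/eqP; rewrite -addr_eq0 -e1.
    have := cl (- t^-1) u (0, 0) Gu G00; rewrite /= u1e addr0.
    by rewrite scalerN scaleNr opprK scalerA mulVf // scale1r.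
  - move=> _ w Iw; exists w, 0; split; first exact: IG.
    by rewrite !scale0r !addr0; case: w {Iw}.
pose s' := fun y => xget 0 (fun x => G (y, x)).
have Gs : forall y, (exists2 x, A x & g x = y) -> G (y, s' y).
  by move=> y h; exact: (xgetPex 0 (full y h)).
exists s'; split.
- by move=> y h; exact: (se _ (Gs y h)).
- move=> a y1 y2 h1 h2.
  have himg : exists2 x, A x & g x = a *: y1 + y2.
    case: h1 => x1 A1 g1; case: h2 => x2 A2 g2.
    by exists (a *: x1 + x2); [exact: Acl | rewrite hg g1 g2].
  exact: (PG_func PGG (Gs _ himg) (cl a _ _ (Gs _ h1) (Gs _ h2))).
- move=> y Dy; apply: (PG_func PGG (Gs y _) (IG _ _)).
    by exists (s y); have [] := hs y Dy.
  by rewrite /I /=; split.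
Qed.
End Ext.
Unset Implicit Arguments. Set Strict Implicit.
Local Close Scope classical_set_scope.
Local Open Scope ring_scope.

(* The hypotheses h02 ... h4m2 are the bihomogeneous components of          *)
(* (d21 + d10 + d01)^2 = 0.  Degree-1 total cochains are pairs              *)
(* (a, b) in C^{1,0} x C^{0,1}.                                             *)
Theorem corollary5p4 (R : fieldType) (C : nat -> nat -> lmodType R)
  (d21 : forall p q, {linear C p q.+1 -> C p.+2 q})
  (d10 : forall p q, {linear C p q -> C p.+1 q})
  (d01 : forall p q, {linear C p q -> C p q.+1})
  (h02 : forall p q (x : C p q), d01 p q.+1 (d01 p q x) = 0)
  (h11 : forall p q (x : C p q),
      d10 p q.+1 (d01 p q x) + d01 p.+1 q (d10 p q x) = 0)
  (h20_0 : forall p (x : C p 0%N),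
      d21 p 0%N (d01 p 0%N x) + d10 p.+1 0%N (d10 p 0%N x) = 0)
  (h20 : forall p q (x : C p q.+1),
      d21 p q.+1 (d01 p q.+1 x) + d10 p.+1 q.+1 (d10 p q.+1 x)
        + d01 p.+2 q (d21 p q x) = 0)
  (h3m1 : forall p q (x : C p q.+1),
      d21 p.+1 q (d10 p q.+1 x) + d10 p.+2 q (d21 p q x) = 0)
  (h4m2 : forall p q (x : C p q.+2),
      d21 p.+2 q (d21 p q.+1 x) = 0) :
  let C1 := (C 1%N 0%N * C 0%N 1%N)%type in
  (* total complex in degree 1 *)
  let Z1C : C1 -> Prop := fun z =>
      [/\ d10 1%N 0%N z.1 + d21 0%N 0%N z.2 = 0,
          d01 1%N 0%N z.1 + d10 0%N 1%N z.2 = 0 &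
          d01 0%N 1%N z.2 = 0] in
  let B1C : C1 -> Prop := fun z =>
      exists x : C 0%N 0%N, z = (d10 0%N 0%N x, d01 0%N 0%N x) in
  (* the subcomplex N_0, with differential d10 *)
  let Z1N : C 1%N 0%N -> Prop := fun y =>
      d01 1%N 0%N y = 0 /\ d10 1%N 0%N y = 0 in
  let B1N : C 1%N 0%N -> Prop := fun y =>
      exists2 x : C 0%N 0%N, d01 0%N 0%N x = 0 & y = d10 0%N 0%N x in
  let B2N : C 2%N 0%N -> Prop := fun y =>
      exists2 x : C 1%N 0%N, d01 1%N 0%N x = 0 & y = d10 1%N 0%N x in
  (* the complex (C^{0,.}, d01) *)
  let B1C0 : C 0%N 1%N -> Prop := fun y =>
      exists x : C 0%N 0%N, y = d01 0%N 0%N x in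
  (* ker rho_1 : xi in A^1 with rho_1(xi) = 0 in H^2(N_0) *)
  let kerrho1 : C 0%N 1%N -> Prop := fun xi =>
      exists eta10 : C 1%N 0%N,
        [/\ d01 1%N 0%N eta10 + d10 0%N 1%N xi = 0,
            d01 0%N 1%N xi = 0 &
            B2N (d21 0%N 0%N xi + d10 1%N 0%N eta10)] in
  [/\ subquot_iso B1C (@zero_sub R _)
        (dsum_sub B1N B1C0) (@zero_sub R _),
      subquot_iso Z1C (@zero_sub R _)
        (dsum_sub Z1N kerrho1) (@zero_sub R _) &
      subquot_iso Z1C B1C
        (dsum_sub Z1N kerrho1) (dsum_sub B1N B1C0)].
Proof.
move=> C1 Z1C B1C Z1N B1N B2N B1C0 kerrho1.
have [s1 [P1 L1 _]] : exists s1 : C 0%N 1%N -> C 0%N 0%N,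
   [/\ forall y, (exists2 x, True & d01 0%N 0%N x = y) -> True /\ d01 0%N 0%N (s1 y) = y,
       linon (fun y => exists2 x, True & d01 0%N 0%N x = y) s1 &
       forall y, zero_sub y -> s1 y = 0].
  apply: extend.
  - by move=> a x y; rewrite linearP.
  - by [].
  - by split => [|a x y -> ->]; rewrite /zero_sub ?scaler0 ?addr0.
  - by move=> y ->; rewrite raddf0.
  - by move=> a x y _ _; rewrite scaler0 addr0.
have img1 : forall x, exists2 x', True & d01 0%N 0%N x' = d01 0%N 0%N x.
  by move=> x; exists x.
have P1' : forall x, d01 0%N 0%N (s1 (d01 0%N 0%N x)) = d01 0%N 0%N x.
  by move=> x; have [] := P1 _ (img1 x).
have s10 : s1 0 = 0.
  apply: (linon0 (S := fun y => exists2 x, True & d01 0%N 0%N x = y)) L1.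
  by exists 0 => //; rewrite raddf0.
have Z1Ccl : subsp Z1C.
  split; first by split; rewrite /= !raddf0 ?addr0.
  move=> a [x1 x2] [y1 y2] [ex1 ex2 ex3] [ey1 ey2 ey3]; split => /=;
    rewrite ?linearP.
  - by rewrite addrACA -scalerDr ex1 ey1 scaler0 addr0.
  - by rewrite addrACA -scalerDr ex2 ey2 scaler0 addr0.
  - by rewrite ex3 ey3 scaler0 addr0.
have B1C0cl : subsp B1C0.
  split; first by exists 0; rewrite raddf0.
  by move=> a _ _ [x ->] [y ->]; exists (a *: x + y); rewrite linearP.
have [s2 [P2 L2 E2]] : exists s2 : C 0%N 1%N -> C1,
   [/\ forall y, (exists2 x, Z1C x & x.2 = y) -> Z1C (s2 y) /\ (s2 y).2 = y,
       linon (fun y => exists2 x, Z1C x & x.2 = y) s2 &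
       forall y, B1C0 y -> s2 y = (d10 0%N 0%N (s1 y), y)].
  apply: (extend (g := snd)) => //.
  - move=> y [x ->]; have := P1' x; move: (s1 _) => x' <-.
    split => //; split => /=.
    + by rewrite addrC h20_0.
    + by rewrite addrC h11.
    + by rewrite h02.
  - move=> a _ _ [x ->] [y ->].
    rewrite (L1 a _ _ (img1 x) (img1 y)) linearP; reflexivity.
have kimg : forall b, kerrho1 b <-> exists2 z, Z1C z & z.2 = b.
  move=> b; split.
  - move=> [eta [e1 e2 [x dx ex]]]; exists (eta - x, b) => //; split => /=.
    + by rewrite raddfB addrAC [d10 _ _ eta + _]addrC ex subrr.
    + by rewrite linearB dx subr0.
    + by [].
  - move=> [[a b'] [e1 e2 e3] /= <-]; exists a; split => //.
    by exists 0; rewrite ?raddf0 // addrC.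
have P2' : forall z, Z1C z -> Z1C (s2 z.2) /\ (s2 z.2).2 = z.2.
  by move=> z Zz; apply: P2; exists z.
have L2' : forall a z w, Z1C z -> Z1C w ->
    s2 (a *: z.2 + w.2) = a *: s2 z.2 + s2 w.2.
  by move=> a z w Zz Zw; apply: L2; [exists z | exists w].
have s20 : s2 0 = 0.
  apply: (linon0 (S := fun y => exists2 x, Z1C x & x.2 = y)) L2.
  by exists 0 => //; case: Z1Ccl.
pose f := fun z : C1 => (z.1 - (s2 z.2).1, z.2).
have flin : forall (a : R) (x y : C1), Z1C x -> Z1C y ->
    f (a *: x + y) = a *: f x + f y.
  move=> a x y Zx Zy; rewrite /f /=.
  rewrite (L2' a x y Zx Zy) /=.
  apply/pair_equal_spec; split => //=.
  by rewrite scalerBr opprD addrACA.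
have finto : forall x, Z1C x -> dsum_sub Z1N kerrho1 (f x).
  move=> [z1 z2] Zz; rewrite /f /=; have [Zp p2] := P2' _ Zz; move: Zz Zp p2 => /=.
  move: (s2 z2) => [p1 p2'] [ez1 ez2 ez3] [ep1 ep2 ep3] /= e.
  subst p2'; rewrite /= in ez1 ez2 ez3 ep1 ep2 ep3; split => /=.
  - split.
    + apply/eqP; rewrite linearB subr_eq0; apply/eqP.
      by apply: (@addIr _ (d10 0%N 1%N z2)); rewrite ez2 ep2.
    + apply/eqP; rewrite linearB subr_eq0; apply/eqP.
      by apply: (@addIr _ (d21 0%N 0%N z2)); rewrite ez1 ep1.
  - by apply/kimg; exists (z1, z2).
have fsurj : forall y, dsum_sub Z1N kerrho1 y ->
    exists2 x, Z1C x & f x = y.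
  move=> [y xi] [[Zy1 Zy2] /kimg kx] /=.
  have [Zp p2] := P2 _ kx; move: Zp p2; case E: (s2 xi) => [p1 p2'] [ep1 ep2 ep3] /= e.
  subst p2'; rewrite /= in ep1 ep2 ep3.
  exists (y + p1, xi).
    split => /=; rewrite ?linearD.
    - by rewrite -addrA ep1 Zy2 addr0.
    - by rewrite -addrA ep2 Zy1 addr0.
    - by [].
  by rewrite /f /= E /= addrK.
split.
- exists (fun z : C1 => (z.1 - d10 0%N 0%N (s1 z.2), z.2)); split.
  + move=> a _ _ [x ->] [y ->]; apply/pair_equal_spec; split => //=.
    rewrite (L1 a _ _ (img1 x) (img1 y)) linearP.
    by rewrite scalerBr opprD addrACA.
  + move=> _ [x ->]; split => /=; last by exists x.
    exists (x - s1 (d01 0%N 0%N x)); first by rewrite linearB P1' subrr.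
    by rewrite linearB.
  + move=> _ [x ->]; rewrite /zero_sub; split.
    * move=> /pair_equal_spec [/= e1 e2].
      rewrite e2 s10 linear0 subr0 in e1.
      by apply/pair_equal_spec; split.
    * move=> /pair_equal_spec [/= e1 e2]; apply/pair_equal_spec; split => //=.
      by rewrite e2 e1 s10 linear0 subrr.
  + move=> [y xi] [] /= [k dk ->] [x ->].
    exists (d10 0%N 0%N (k + s1 (d01 0%N 0%N x)), d01 0%N 0%N (k + s1 (d01 0%N 0%N x))).
      by exists (k + s1 (d01 0%N 0%N x)).
    exists 0 => //; rewrite addr0.
    have hb : d01 0%N 0%N (k + s1 (d01 0%N 0%N x)) = d01 0%N 0%N x.
      by rewrite linearD dk add0r P1'.
    by apply/pair_equal_spec; rewrite /= hb linearD addrK.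
- exists f; split; first exact: flin; first exact: finto.
  + move=> z Zz; rewrite /zero_sub; split.
    * case: z Zz => [z1 z2] Zz /pair_equal_spec [/= e1 e2]; subst z2.
      rewrite s20 /= subr0 in e1.
      by rewrite e1.
    * by move=> ->; apply/pair_equal_spec; rewrite /= s20 subrr.
  + move=> y /fsurj [x Zx <-]; exists x => //; exists 0; [done | by rewrite addr0].
- exists f; split; first exact: flin; first exact: finto.
  + move=> [z1 z2] Zz; rewrite /f /=; split.
    * move=> [] /= [k dk ek] [x ex].
      rewrite (E2 z2 (ex_intro _ x ex)) /= in ek.
      exists (k + s1 z2); apply/pair_equal_spec; split => /=.
        by rewrite linearD -ek subrK.
      by rewrite linearD dk add0r ex P1'.
    * move=> [x /pair_equal_spec [-> ->]].
      rewrite E2; last by exists x.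
      split; last by exists x.
      exists (x - s1 (d01 0%N 0%N x)); first by rewrite linearB P1' subrr.
      by rewrite /= linearB.
  + move=> y /fsurj [x Zx <-]; exists x => //; exists 0; last by rewrite addr0.
    by split; exists 0; rewrite ?linear0.
Qed.
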